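(* Let $n,d$ be positive integers, $\mathbf{c}\in\mathbb{Z}^n_+$, and $\mathbb{P}\subseteq[0,d]^n$ a bounded polyhedron with $\mathbb{P}\cap\mathbb{Z}^n\ne\emptyset$, and consider the lexicographic integer program of finding a lexicographically maximum element of $\mathbb{S}=\{(\mathbf{c}^\top\mathbf{x},x_1,\dots,x_n):\mathbf{x}\in\mathbb{P}\cap\mathbb{Z}^n\}$ (equivalently, an optimal solution of $\max\{\mathbf{c}^\top\mathbf{x}:\mathbf{x}\in\mathbb{P}\cap\mathbb{Z}^n\}$, ties broken lexicographically). Let $a_1=d$ and $a_k=d(1+\sum_{j=1}^{k-1}a_j)$ for $k\in\{2,\dots,n\}$. Consider the cutting plane algorithm: set $L_0=\{\mathbf{z}\in\mathbb{R}^{n+1}:(z_1,\dots,z_n)\in\mathbb{P},\ z_0=\sum_i c_iz_i\}$; at iteration $t=0,1,2,\dots$ let $\mathbf{z}_t^\star$ be a lexicographically maximum element of $L_t$; if $\mathbf{z}_t^\star$ is integral, stop and output it; otherwise generate the $n+1$ cuts $z_i+\sum_{j=0}^{i-1}a_{i-j}(z_j-\lceil(\mathbf{z}_t^\star)_j\rceil)\le\lfloor(\mathbf{z}_t^\star)_i\rfloor$, $i\in\{0,\dots,n\}$, select the cut with index $k=\min\{j:(\mathbf{z}_t^\star)_j\notin\mathbb{Z}\}$, and let $L_{t+1}$ be $L_t$ intersected with the half-space defined by that cut. Then this algorithm terminates after a finite number of iterations and outputs an optimal solution of the lexicographic integer program, i.e., a lexicographically maximum element of $\mathbb{S}$.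
   Context: Lexicographic order on $\mathbb{R}^{n+1}$: $\mathbf{x}<_L\mathbf{y}$ if there is $k\in\{0,\dots,n\}$ with $x_k<y_k$ and $x_i=y_i$ for all $i<k$; $\mathbf{x}\le_L\mathbf{y}$ means $\mathbf{x}<_L\mathbf{y}$ or $\mathbf{x}=\mathbf{y}$. A lexicographically maximum element of a set $T$ is some $\mathbf{t}\in T$ with $\mathbf{s}\le_L\mathbf{t}$ for all $\mathbf{s}\in T$. The rule of selecting the cut whose index is the first non-integral coordinate of the current LP solution is the paper's standing assumption on the learned cut selection policy (HEM/HEM++). *)

(* Defs.v *)
From HB Require Import structures.
From mathcomp Require Import all_boot all_order all_algebra.
From mathcomp Require Import reals.
Set Implicit Arguments. Unset Strict Implicit. Unset Printing Implicit Defensive.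
Import Order.TTheory GRing.Theory Num.Theory.
Local Open Scope ring_scope.

(* Vectors z = (z_0, z_1, ..., z_n) in R^(n+1) are functions 'I_n.+1 -> R;
   z_0 is index ord0 and z_i (i >= 1) is index lift ord0 (i-1). *)

Definition lex_lt (R : realType) (n : nat) (x y : 'I_n.+1 -> R) : Prop :=
  exists k : 'I_n.+1, x k < y k /\ (forall i : 'I_n.+1, (i < k)%N -> x i = y i).
Definition lex_le (R : realType) (n : nat) (x y : 'I_n.+1 -> R) : Prop :=
  lex_lt x y \/ x = y.
Definition lex_max (R : realType) (n : nat) (T : ('I_n.+1 -> R) -> Prop)
  (t : 'I_n.+1 -> R) : Prop :=
  T t /\ (forall s, T s -> lex_le s t).

Definition polyhedron (R : realType) (n m : nat) (A : 'I_m -> 'I_n -> R)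
  (b : 'I_m -> R) (x : 'I_n -> R) : Prop :=
  forall k : 'I_m, \sum_(i < n) A k i * x i <= b k.

(* asum d k = a_1 + ... + a_k ; a d k = a_k = d (1 + a_1 + ... + a_{k-1}) *)
Fixpoint asum (d k : nat) : nat :=
  match k with
  | 0 => 0
  | k'.+1 => asum d k' + d * (1 + asum d k')
  end.
Definition acoef (d k : nat) : nat := d * (1 + asum d k.-1).

Definition L0 (R : realType) (n : nat) (P : ('I_n -> R) -> Prop) (c : 'I_n -> int)
  (z : 'I_n.+1 -> R) : Prop :=
  P (fun i => z (lift ord0 i)) /\ z ord0 = \sum_(i < n) (c i)%:~R * z (lift ord0 i).

Definition Sset (R : realType) (n : nat) (P : ('I_n -> R) -> Prop) (c : 'I_n -> int)
  (s : 'I_n.+1 -> R) : Prop :=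
  exists x : 'I_n -> int, P (fun i => (x i)%:~R) /\
    s ord0 = ((\sum_(i < n) c i * x i)%R)%:~R /\
    (forall i : 'I_n, s (lift ord0 i) = (x i)%:~R).

Definition integral_vec (R : realType) (n : nat) (z : 'I_n.+1 -> R) : Prop :=
  forall i, z i \is a Num.int.

Definition cut (R : realType) (n d : nat) (i : 'I_n.+1) (zs : 'I_n.+1 -> R)
  (z : 'I_n.+1 -> R) : Prop :=
  z i + \sum_(j < n.+1 | (j < i)%N) (acoef d (i - j))%:R * (z j - (Num.ceil (zs j))%:~R)
  <= (Num.floor (zs i))%:~R.

Definition algorithm_run (R : realType) (n d : nat) (P : ('I_n -> R) -> Prop)
  (c : 'I_n -> int) (T : nat) (L : nat -> ('I_n.+1 -> R) -> Prop)
  (z : nat -> 'I_n.+1 -> R) : Prop :=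
  (forall w, L 0%N w <-> L0 P c w) /\
  (forall t, (t <= T)%N -> lex_max (L t) (z t)) /\
  (forall t, (t < T)%N ->
     exists k : 'I_n.+1,
       ~ (z t k \is a Num.int) /\
       (forall j : 'I_n.+1, (j < k)%N -> z t j \is a Num.int) /\
       (forall w, L t.+1 w <-> (L t w /\ cut d k (z t) w))) /\
  integral_vec (z T).

(* Main.v *)
Require Import Defs.
From HB Require Import structures.
From mathcomp Require Import all_boot all_order all_algebra.
From mathcomp Require Import reals.
From mathcomp Require Import boolp classical_sets functions topology normedtype.
From mathcomp Require Import lra zify.
Import Order.TTheory GRing.Theory Num.Theory.
Import numFieldTopology.Exports numFieldNormedType.Exports.
Local Open Scope classical_set_scope.
Local Open Scope ring_scope.


Lemma asum_sum d k m : (m <= k)%N ->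
  (\sum_(m <= i < k) acoef d (k - i) = asum d (k - m))%N.
Proof.
move=> mk; have [p] := ubnP (k - m); elim: p m mk => [|p IH] m mk hp.
  by [].
have [km|km] := eqVneq m k.
  by rewrite km big_geq // subnn.
have mlt : (m < k)%N by rewrite ltn_neqAle km.
rewrite big_ltn // IH //; last by lia.
have -> : (k - m = (k - m.+1).+1)%N by lia.
by rewrite /acoef /= addnC.
Qed.

Lemma key_ineq (R : realType) (d k l : nat) (f : nat -> R) : (l < k)%N ->
  (forall i, (i < l)%N -> f i = 0) -> f l <= -1 ->
  (forall i, (l < i)%N -> (i < k)%N -> f i <= d%:R) ->
  d%:R + \sum_(0 <= i < k) (acoef d (k - i))%:R * f i <= 0.
Proof.
move=> lk f0 fl fd.
rewrite (@big_cat_nat _ _ _ l) /=; last 2 first; [by []|exact: ltnW|].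
rewrite big_nat_cond big1 ?add0r; last first.
  by move=> i /andP[/andP[_ il] _]; rewrite f0 ?mulr0.
rewrite big_ltn //.
have h1 : (acoef d (k - l))%:R * f l <= - (acoef d (k - l))%:R.
  by rewrite -mulrN1 ler_wpM2l.
have h2 : \sum_(l.+1 <= i < k) (acoef d (k - i))%:R * f i <=
    ((d * asum d (k - l.+1))%N)%:R :> R.
  rewrite -(@asum_sum d k l.+1 lk) mulnC natrM natr_sum mulr_suml.
  apply: ler_sum_nat => i /andP[li ik].
  by rewrite ler_wpM2l // fd.
have h3 : (acoef d (k - l))%:R = d%:R + ((d * asum d (k - l.+1))%N)%:R :> R.
  rewrite -natrD; congr (_%:R).
  rewrite /acoef; have -> : ((k - l).-1 = k - l.+1)%N by lia.
  by rewrite mulnDr muln1.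
lra.
Qed.


Section Top.
Variables (R : realType) (n : nat).
Notation V := {ptws 'I_n.+1 -> R}.

Lemma proj_cont (i : 'I_n.+1) : continuous (fun z : V => z i).
Proof. exact: (@proj_continuous _ (fun _ => R) i). Qed.

Lemma cont_sum (I : Type) (r : seq I) (P : pred I) (F : I -> V -> R) :
  (forall i, continuous (F i)) -> continuous (fun z => \sum_(i <- r | P i) F i z).
Proof.
move=> Fc; elim: r => [|a r IH].
  have -> : (fun z => \sum_(i <- [::] | P i) F i z) = (fun=> 0).
    by apply/funext => z; rewrite big_nil.
  exact: cst_continuous.
have -> : (fun z => \sum_(i <- a :: r | P i) F i z) =
  (fun z => if P a then F a z + \sum_(i <- r | P i) F i z else \sum_(i <- r | P i) F i z).
  by apply/funext => z; rewrite big_cons.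
case: (P a) => //.
move=> x; apply: continuousD; [exact: Fc|exact: IH].
Qed.

Lemma cont_scale (a : R) (g : V -> R) : continuous g -> continuous (fun z => a * g z).
Proof. by move=> gc x; apply: continuousM; [exact: cst_continuous|exact: gc]. Qed.

Lemma cont_add (g h : V -> R) : continuous g -> continuous h -> continuous (fun z => g z + h z).
Proof. by move=> gc hc x; apply: continuousD; [exact: gc|exact: hc]. Qed.

Lemma cont_sub (g h : V -> R) : continuous g -> continuous h -> continuous (fun z => g z - h z).
Proof. by move=> gc hc x; apply: continuousB; [exact: gc|exact: hc]. Qed.

Lemma closed_lefun (g h : V -> R) : continuous g -> continuous h ->
  closed [set z | g z <= h z].
Proof.
move=> gc hc.
have -> : [set z | g z <= h z] = (fun z => g z - h z) @^-1` [set x : R | x <= 0].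
  by apply/funext => z; apply/propext; rewrite /preimage /= subr_le0.
apply: preimage_closed; last exact: closed_le.
move=> z _; apply: continuousB; [exact: gc|exact: hc].
Qed.

Lemma closed_eqfun (g h : V -> R) : continuous g -> continuous h ->
  closed [set z | g z = h z].
Proof.
move=> gc hc.
have -> : [set z | g z = h z] = [set z | g z <= h z] `&` [set z | h z <= g z].
  apply/funext => z; apply/propext; split => [e|[]] /=; first by rewrite /setI /= e; split.
  by move=> h1 h2; apply/eqP; rewrite eq_le h1 h2.
by apply: closedI; apply: closed_lefun.
Qed.

Lemma exists_max (K : set V) (f : V -> R) : compact K -> K !=set0 -> continuous f ->
  exists2 x, K x & forall y, K y -> f y <= f x.
Proof.
move=> cK K0 fc.
have cfK : compact (f @` K).
  apply: continuous_compact => //; exact: continuous_subspaceT.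
have fK0 : (f @` K) !=set0 by case: K0 => x Kx; exists (f x); exists x.
have hs := compact_has_sup fK0 cfK.
have : closure (f @` K) (sup (f @` K)) by apply: closure_sup => //; case: hs.
rewrite -(proj1 (closure_id _)); last exact: compact_closed (@Rhausdorff R) cfK.
case=> x Kx fx; exists x => // y Ky; rewrite fx.
by apply: sup_upper_bound => //; exists y.
Qed.

Lemma lexmax_exists (K : set V) : compact K -> K !=set0 -> exists t, lex_max K t.
Proof.
move=> cK K0.
have inv : forall j, (j <= n.+1)%N -> exists K' : set V,
  [/\ compact K', K' !=set0, K' `<=` K,
   (forall t1 t2, K' t1 -> K' t2 -> forall i : 'I_n.+1, (i < j)%N -> t1 i = t2 i) &
   (forall s t, K s -> K' t ->
     (exists k : 'I_n.+1, [/\ (k < j)%N, s k < t k & forall i : 'I_n.+1, (i < k)%N -> s i = t i])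
     \/ K' s)].
  elim=> [|j IH] hj.
    by exists K; split => // s t Ks Kt; right.
  have [K' [cK' K'0 K'K pre cmp]] := IH (ltnW hj).
  pose J : 'I_n.+1 := Ordinal hj.
  have [x K'x xmax] := @exists_max K' (fun z : V => z J) cK' K'0 (proj_cont J).
  exists (K' `&` [set z | z J = x J]); split.
  - apply: compact_closedI => //; apply: closed_eqfun; first exact: proj_cont.
    exact: cst_continuous.
  - by exists x.
  - by move=> z [/K'K].
  - move=> t1 t2 [K1 e1] [K2 e2] i; rewrite ltnS leq_eqVlt => /orP[/eqP ij|ij].
      have -> : i = J by apply: val_inj.
      by rewrite e1 e2.
    exact: pre.
  - move=> s t Ks [K't et].
    case: (cmp s t Ks K't) => [[k [kj sk spre]]|K's].
      by left; exists k; split => //; apply: ltnW.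
    have := xmax s K's; rewrite le_eqVlt => /orP[/eqP sJ|sJ].
      by right; split.
    left; exists J; split => //; first by rewrite et.
    by move=> i ij; apply: pre.
have [K' [cK' [t K't] K'K pre cmp]] := inv n.+1 (leqnn _).
exists t; split; first exact: K'K.
move=> s Ks; case: (cmp s t Ks K't) => [[k [_ sk spre]]|K's].
  by left; exists k.
by right; apply/funext => i; apply: pre.
Qed.

Lemma box_compact (M : R) : compact [set z : V | forall i, 0 <= z i <= M].
Proof.
have := @tychonoff _ (fun _ : 'I_n.+1 => R) (fun _ => `[0, M]%classic)
  (fun _ => @segment_compact R 0 M).
by congr compact.
Qed.

End Top.


Lemma ev_const (N : nat -> int) tb : (forall t, (tb <= t)%N -> 0 <= N t) ->
  (forall t, (tb <= t)%N -> N t.+1 <= N t) ->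
  exists t1, (tb <= t1)%N /\ forall t, (t1 <= t)%N -> N t = N t1.
Proof.
move=> N0 Nd.
have mono : forall k t, (tb <= t)%N -> N (t + k)%N <= N t.
  elim=> [|k IH] t tt; first by rewrite addn0.
  rewrite addnS; apply: le_trans (IH t tt); apply: Nd; lia.
have mono' : forall t s, (tb <= t)%N -> (t <= s)%N -> N s <= N t.
  by move=> t s tt ts; rewrite -(subnKC ts); apply: mono.
suff : forall v : nat, forall t0, (tb <= t0)%N -> N t0 <= v%:Z ->
    exists t1, (tb <= t1)%N /\ forall t, (t1 <= t)%N -> N t = N t1.
  by move=> /(_ `|N tb|%N tb (leqnn _)); apply; rewrite abszE ler_norm.
elim=> [|v IH] t0 tt Nv.
  exists t0; split => // t t0t; have := mono' _ _ tt t0t.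
  have := N0 t0 tt; have := N0 t (leq_trans tt t0t); lia.
have [H|H] := pselect (forall t, (t0 <= t)%N -> N t = N t0).
  by exists t0.
have [t [t0t Nt]] : exists t, (t0 <= t)%N /\ N t <> N t0.
  apply: contrapT => H'; apply: H => t t0t; apply: contrapT => Nt.
  by apply: H'; exists t.
apply: (IH t); first exact: leq_trans t0t.
have := mono' _ _ tt t0t; lia.
Qed.

Section Alg.
Variables (R : realType) (n d m : nat) (c : 'I_n -> int)
  (A : 'I_m -> 'I_n -> R) (b : 'I_m -> R).
Hypothesis hc : forall i, 0 <= c i.
Hypothesis hb : forall x, polyhedron A b x -> forall i, 0 <= x i <= d%:R.
Hypothesis hne : exists x : 'I_n -> int, polyhedron A b (fun i => (x i)%:~R).
Notation V := {ptws 'I_n.+1 -> R}.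
Notation P := (polyhedron A b).

Lemma L0_ge0 z : L0 (polyhedron A b) c z -> forall i, 0 <= z i.
Proof.
move=> [Pz z0] i; case: (unliftP ord0 i) => [j ->|->].
  by case/andP: (hb _ Pz j).
rewrite z0; apply: sumr_ge0 => j _; apply: mulr_ge0; first by rewrite ler0z.
by case/andP: (hb _ Pz j).
Qed.

Lemma L0_led z : L0 (polyhedron A b) c z -> forall i, i != ord0 -> z i <= d%:R.
Proof.
move=> [Pz z0] i; case: (unliftP ord0 i) => [j ->|->]; last by rewrite eqxx.
by case/andP: (hb _ Pz j).
Qed.

Lemma int_lt1 (x y : R) : x \is a Num.int -> y \is a Num.int -> x < y -> x + 1 <= y.
Proof.
move=> /intrP[a ->] /intrP[b' ->]; rewrite ltr_int => ab.
by rewrite -[1]/(1%:~R) -intrD ler_int; lia.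
Qed.

Lemma sum_ord_nat (F : 'I_n.+1 -> R) (k : nat) : (k <= n.+1)%N ->
  \sum_(j < n.+1 | (j < k)%N) F j = \sum_(0 <= i < k) F (inord i).
Proof.
move=> kn; rewrite big_mkord (big_ord_widen _ (fun i => F (inord i)) kn) /=.
by apply: eq_bigr => i _; rewrite inord_val.
Qed.

Lemma cut_valid (s zs : 'I_n.+1 -> R) (k : 'I_n.+1) :
  integral_vec s -> L0 (polyhedron A b) c s -> L0 (polyhedron A b) c zs ->
  lex_le s zs -> ~~ (zs k \is a Num.int) ->
  (forall j : 'I_n.+1, (j < k)%N -> zs j \is a Num.int) -> cut d k zs s.
Proof.
move=> sint Ls Lz [|<-]; last by rewrite sint.
case=> l [slt spre] zk zpre; rewrite /cut.
have [kl|lk|kl] := ltngtP k l.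
- by move: zk; rewrite -(spre k kl) sint.
-
  have k0 : k != ord0 by apply/eqP => k0; rewrite k0 in lk.
  rewrite sum_ord_nat; last exact: ltnW (ltn_ord k).
  set f := fun i : nat => s (inord i) - (Num.ceil (zs (inord i)))%:~R.
  have -> : \sum_(0 <= i < k) (acoef d (k - @inord n i))%:R *
      (s (inord i) - (Num.ceil (zs (inord i)))%:~R) =
      \sum_(0 <= i < k) (acoef d (k - i))%:R * f i.
    apply: eq_big_nat => i /andP[_ ik]; rewrite inordK //.
    exact: ltn_trans ik (ltn_ord k).
  have key := @key_ineq R d k l f lk.
  have hf0 : forall i, (i < l)%N -> f i = 0.
    move=> i il; rewrite /f.
    have iln : (i < n.+1)%N by apply: ltn_trans il (ltn_ord l).
    rewrite spre ?inordK // ceilK ?subrr //.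
    by apply: zpre; rewrite inordK //; apply: ltn_trans il lk.
  have hfl : f l <= -1.
    rewrite /f inord_val ceilK; last exact: zpre.
    have := @int_lt1 _ _ (sint l) (zpre _ lk) slt; lra.
  have hfd : forall i, (l < i)%N -> (i < k)%N -> f i <= d%:R.
    move=> i li ik; rewrite /f.
    have ikn : (i < n.+1)%N by apply: ltn_trans ik (ltn_ord k).
    have h1 : s (inord i) <= d%:R.
      apply: (L0_led _ Ls); apply/eqP => /(congr1 val) /=; rewrite inordK //.
      by move=> i0; rewrite i0 in li.
    have h2 : 0 <= (Num.ceil (zs (inord i)))%:~R :> R.
      rewrite ler0z ceil_ge0; have := L0_ge0 _ Lz (inord i); lra.
    lra.
  have := key hf0 hfl hfd.
  have h3 : s k <= d%:R by apply: (L0_led _ Ls).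
  have h4 : 0 <= (Num.floor (zs k))%:~R :> R by rewrite ler0z floor_ge0 (L0_ge0 _ Lz).
  lra.
- have kl' : k = l by apply: val_inj.
  subst l.
  rewrite big1 ?addr0; last first.
    by move=> j jk; rewrite spre // ceilK ?subrr ?mulr0 //; apply: zpre.
  move: slt; case/intrP: (sint k) => a ->; rewrite ler_int floor_ge_int; exact: ltW.
Qed.

Definition lm (L : ('I_n.+1 -> R) -> Prop) : 'I_n.+1 -> R :=
  match pselect (exists t, lex_max L t) with
  | left h => projT1 (cid h) | right _ => fun _ => 0 end.

Lemma lmP L : (exists t, lex_max L t) -> lex_max L (lm L).
Proof.
rewrite /lm; case: pselect => // h _; exact: (projT2 (cid h)).
Qed.

Definition kfirst (z : 'I_n.+1 -> R) : option 'I_n.+1 :=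
  [pick k | ~~ (z k \is a Num.int) &&
            [forall j : 'I_n.+1, (j < k)%N ==> (z j \is a Num.int)]].

Lemma kfirst_some z k : kfirst z = Some k ->
  ~~ (z k \is a Num.int) /\ (forall j : 'I_n.+1, (j < k)%N -> z j \is a Num.int).
Proof.
rewrite /kfirst; case: pickP => // k' /andP[h1 /forallP h2] [<-]; split => // j jk.
by have := h2 j; rewrite jk.
Qed.

Lemma kfirst_none z : kfirst z = None -> integral_vec z.
Proof.
rewrite /kfirst; case: pickP => // H _ i; apply: contrapT => /negP ni.
have ex : exists m0, (m0 < n.+1)%N && ~~ (z (inord m0) \is a Num.int).
  by exists i; rewrite ltn_ord inord_val.
case: (ex_minnP ex) => m0 /andP[mn nm] mmin.
have := H (inord m0); rewrite nm /=; move/negP; apply; apply/forallP => j.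
apply/implyP => jm; rewrite inordK // in jm.
apply: contraT => nj; have := mmin j; rewrite ltn_ord inord_val => /(_ nj).
by rewrite leqNgt jm.
Qed.

Lemma kfirst_int z : integral_vec z -> kfirst z = None.
Proof.
rewrite /kfirst; case: pickP => // k /andP[h _] zi.
by rewrite zi in h.
Qed.

Definition next (L : ('I_n.+1 -> R) -> Prop) : ('I_n.+1 -> R) -> Prop :=
  match kfirst (lm L) with
  | Some k => fun w => L w /\ cut d k (lm L) w
  | None => L end.

Definition Lseq t := iter t next (L0 P c).
Definition zz t := lm (Lseq t).

Lemma Lseq_step t k : kfirst (zz t) = Some k ->
  forall w, Lseq t.+1 w <-> (Lseq t w /\ cut d k (zz t) w).
Proof.
move=> e w; rewrite /Lseq iterS /next -/(Lseq t) -/(zz t) e //.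
Qed.

Lemma Lseq_sub t w : Lseq t.+1 w -> Lseq t w.
Proof.
rewrite /Lseq iterS /next -/(Lseq t); case: kfirst => // k [] //.
Qed.

Lemma Sset_prop s : Sset P c s -> integral_vec s /\ L0 P c s.
Proof.
case=> x [Px [s0 sl]]; split.
  move=> i; case: (unliftP ord0 i) => [j ->|->]; first by rewrite sl intr_int.
  by rewrite s0 intr_int.
split.
  by have -> : (fun i => s (lift ord0 i)) = (fun i => (x i)%:~R) by apply/funext => i; rewrite sl.
rewrite s0; under [RHS]eq_bigr do rewrite sl.
rewrite (big_morph (fun z : int => (z%:~R : R)) (id1 := 0) (op1 := +%R) (@intrD _) (mulr0z _)).
by apply: eq_bigr => i _; rewrite intrM.
Qed.

Definition Mb : R := d%:R * (1 + \sum_(i < n) (c i)%:~R).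

Lemma L0_box z : L0 P c z -> forall i, 0 <= z i <= Mb.
Proof.
move=> Lz i; rewrite (L0_ge0 _ Lz) /=.
have sc : 0 <= \sum_(i < n) (c i)%:~R :> R by apply: sumr_ge0 => j _; rewrite ler0z.
have d0 : 0 <= d%:R :> R by [].
have [->|i0] := eqVneq i ord0.
  case: Lz => Pz ->.
  have -> : Mb = d%:R + \sum_(i < n) (c i)%:~R * d%:R.
    by rewrite /Mb mulrDr mulr1 mulr_sumr; congr (_ + _); apply: eq_bigr => j _; rewrite mulrC.
  suff : \sum_(i < n) (c i)%:~R * z (lift ord0 i) <= \sum_(i < n) (c i)%:~R * d%:R :> R.
    lra.
  apply: ler_sum => j _; apply: ler_wpM2l; first by rewrite ler0z.
  by case/andP: (hb _ Pz j).
have := L0_led _ Lz _ i0; rewrite /Mb.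
have : d%:R <= d%:R * (1 + \sum_(i < n) (c i)%:~R) :> R.
  by rewrite -{1}[d%:R]mulr1 ler_wpM2l // lerDl.
lra.
Qed.

Lemma closed_L0 : closed (L0 P c : set V).
Proof.
have -> : (L0 P c : set V) =
  (\bigcap_(k in setT) [set z : V | \sum_(i < n) A k i * z (lift ord0 i) <= b k]) `&`
  [set z : V | z ord0 = \sum_(i < n) (c i)%:~R * z (lift ord0 i)].
  apply/funext => z; apply/propext; split.
    by case=> Pz z0; split => // k _; apply: Pz.
  by case=> Pz z0; split => // k; apply: Pz.
apply: closedI.
  apply: closed_bigI => k _; apply: closed_lefun; last exact: cst_continuous.
  apply: cont_sum => i; apply: cont_scale; exact: proj_cont.
apply: closed_eqfun; first exact: proj_cont.
apply: cont_sum => i; apply: cont_scale; exact: proj_cont.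
Qed.

Lemma closed_cut k (zs : 'I_n.+1 -> R) : closed (cut d k zs : set V).
Proof.
apply: closed_lefun; last exact: cst_continuous.
apply: cont_add; first exact: proj_cont.
apply: cont_sum => j; apply: cont_scale; apply: cont_sub; first exact: proj_cont.
exact: cst_continuous.
Qed.

Lemma inv t : [/\ closed (Lseq t : set V), (forall w, Lseq t w -> L0 P c w)
  & forall s, Sset P c s -> Lseq t s].
Proof.
elim: t => [|t [cl sub sS]].
  by split => //; [exact: closed_L0 | move=> s /Sset_prop[]].
have lmx : lex_max (Lseq t) (zz t).
  apply: lmP; apply: (@lexmax_exists R n).
    apply: (@subclosed_compact _ _ [set z : V | forall i, 0 <= z i <= Mb]) => //.
      exact: box_compact.
    by move=> w /sub; apply: L0_box.
  case: hne => x Px.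
  pose s : 'I_n.+1 -> R := fun i => match unlift ord0 i with
    Some j => (x j)%:~R | None => ((\sum_(i < n) c i * x i)%R)%:~R end.
  exists s; apply: sS; exists x; split => //.
  by split; [rewrite /s unlift_none | move=> i; rewrite /s liftK].
case e : (kfirst (zz t)) => [k|].
  have [nk pk] := kfirst_some _ _ e.
  split.
  - have -> : (Lseq t.+1 : set V) = (Lseq t : set V) `&` (cut d k (zz t) : set V).
      by apply/funext => w; apply/propext; rewrite (Lseq_step _ _ e _).
    apply: closedI => //; exact: closed_cut.
  - by move=> w /Lseq_sub /sub.
  - move=> s Ss; apply/(Lseq_step _ _ e _); split; first exact: sS.
    have [si Ls] := Sset_prop _ Ss.
    apply: (@cut_valid s (zz t) k si Ls (sub _ lmx.1)) => //.
    exact: lmx.2 _ (sS _ Ss).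
have -> : Lseq t.+1 = Lseq t by rewrite /Lseq iterS /next -/(Lseq t) -/(zz t) e.
by split.
Qed.


Lemma lexmax_t t : lex_max (Lseq t) (zz t).
Proof.
have [cl sub sS] := inv t.
apply: lmP; apply: (@lexmax_exists R n).
  apply: (@subclosed_compact _ _ [set z : V | forall i, 0 <= z i <= Mb]) => //.
    exact: box_compact.
  by move=> w /sub; apply: L0_box.
case: hne => x Px.
pose s : 'I_n.+1 -> R := fun i => match unlift ord0 i with
  Some j => (x j)%:~R | None => ((\sum_(i < n) c i * x i)%R)%:~R end.
exists s; apply: sS; exists x; split => //.
by split; [rewrite /s unlift_none | move=> i; rewrite /s liftK].
Qed.

Lemma zz_mono t : lex_le (zz t.+1) (zz t).
Proof. exact: (lexmax_t t).2 _ (Lseq_sub _ _ (lexmax_t t.+1).1). Qed.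

Lemma term : exists T, kfirst (zz T) = None.
Proof.
apply: contrapT => H.
have H' : forall t, exists k, kfirst (zz t) = Some k.
  move=> t; case e: (kfirst (zz t)) => [k|]; first by exists k.
  by exfalso; apply: H; exists t.
have stab : forall j, (j <= n.+1)%N -> exists t0, forall t, (t0 <= t)%N ->
    forall i : 'I_n.+1, (i < j)%N -> zz t i = zz t0 i /\ zz t i \is a Num.int.
  elim=> [|j IH] hj; first by exists 0%N.
  have [t0 st] := IH (ltnW hj).
  pose J : 'I_n.+1 := Ordinal hj.
  have pre : forall t t', (t0 <= t)%N -> (t0 <= t')%N ->
      forall i : 'I_n.+1, (i < j)%N -> zz t i = zz t' i.
    by move=> t t' h h' i ij; rewrite (st t h i ij).1 (st t' h' i ij).1.
  have a : forall t, (t0 <= t)%N -> zz t.+1 J <= zz t J.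
    move=> t h; case: (zz_mono t) => [[k [lt kpre]]|->]; last by [].
    have [kJ|Jk|kJ] := ltngtP k J.
    - by move: lt; rewrite (pre t.+1 t (leqW h) h k kJ) ltxx.
    - by rewrite kpre.
    - have kJ' : k = J by apply: val_inj.
      by rewrite -kJ'; apply: ltW.
  have bb : forall t, (t0 <= t)%N -> ~~ (zz t J \is a Num.int) ->
      zz t.+1 J <= (Num.floor (zz t J))%:~R.
    move=> t h nJ; have [k e] := H' t; have [nk pk] := kfirst_some _ _ e.
    have kJ : k = J.
      apply: val_inj => /=; have [kJ|Jk|//] := ltngtP k j.
      - by rewrite (st t h k kJ).2 in nk.
      - by have := pk J Jk; rewrite (negbTE nJ).
    rewrite kJ in e.
    have := (proj1 (Lseq_step _ _ e _) (lexmax_t t.+1).1).2.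
    rewrite /cut big1 ?addr0 //.
    move=> i iJ; rewrite (pre t.+1 t (leqW h) h i iJ) ceilK ?subrr ?mulr0 //.
    exact: (st t h i iJ).2.
  pose N := fun t => Num.ceil (zz t J).
  have [t1 [t01 Nc]] : exists t1, (t0 <= t1)%N /\ forall t, (t1 <= t)%N -> N t = N t1.
    apply: ev_const.
      move=> t h; rewrite /N ceil_ge0.
      have [_ sub _] := inv t.
      have := L0_ge0 _ (sub _ (lexmax_t t).1) J; lra.
    by move=> t h; rewrite /N; apply: le_ceil; apply: a.
  have intJ : forall t, (t1 <= t)%N -> zz t J \is a Num.int.
    move=> t' h'; apply: contraT => nJ.
    have h2 := bb t' (leq_trans t01 h') nJ.
    have e1 : N t'.+1 = N t' by rewrite (Nc _ h') (Nc _ (leqW h')).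
    have cf : Num.ceil (zz t' J) = Num.floor (zz t' J) + 1.
      by rewrite ceil_floor; move: nJ => /negbTE ->.
    move: e1; rewrite /N cf.
    have : Num.ceil (zz t'.+1 J) <= Num.floor (zz t' J) by rewrite ceil_le_int.
    lia.
  exists t1 => t h1 i; rewrite ltnS leq_eqVlt => /orP[/eqP ij|ij].
    have -> : i = J by apply: val_inj.
    split; last exact: intJ.
    rewrite -(ceilK (intJ t h1)) -(ceilK (intJ t1 (leqnn _))); congr (_%:~R).
    exact: Nc.
  have := st t (leq_trans t01 h1) i ij; have := st t1 t01 i ij.
  by move=> [-> _] [-> ->].
have [t0 st] := stab n.+1 (leqnn _).
have := @kfirst_int (zz t0) (fun i => (st t0 (leqnn _) i (ltn_ord i)).2).
by have [k ->] := H' t0.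
Qed.

Lemma main_run : exists (T : nat) (L : nat -> ('I_n.+1 -> R) -> Prop) (z : nat -> 'I_n.+1 -> R),
    algorithm_run d P c T L z /\ lex_max (Sset P c) (z T).
Proof.
have [T0 e0] := term.
have ex : exists T, kfirst (zz T) == None by exists T0; rewrite e0.
case: (ex_minnP ex) => T /eqP eT Tmin.
exists T, Lseq, zz; split.
  split; first by move=> w; exact: iff_refl.
  split; first by move=> t _; exact: lexmax_t.
  split; last exact: kfirst_none _ eT.
  move=> t tT; case e: (kfirst (zz t)) => [k|].
    have [nk pk] := kfirst_some _ _ e; exists k; split; first exact/negP.
    split => //; exact: Lseq_step _ _ e.
  by have := Tmin t; rewrite e eqxx => /(_ isT); rewrite leqNgt tT.
have [_ sub sS] := inv T.
have LT := sub _ (lexmax_t T).1.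
have zi := kfirst_none _ eT.
split; last by move=> s Ss; exact: (lexmax_t T).2 _ (sS s Ss).
exists (fun i => Num.floor (zz T (lift ord0 i))).
have fl : forall i, ((Num.floor (zz T (lift ord0 i)))%:~R) = zz T (lift ord0 i) :> R.
  by move=> i; rewrite floorK //; exact: zi.
split; [| split].
- have -> : (fun i => ((Num.floor (zz T (lift ord0 i)))%:~R : R)) = (fun i => zz T (lift ord0 i)).
    by apply/funext => i; rewrite fl.
  exact: LT.1.
- rewrite (big_morph (fun z : int => (z%:~R : R)) (id1 := 0) (op1 := +%R) (@intrD _) (mulr0z _)).
  rewrite LT.2; apply: eq_bigr => i _; by rewrite intrM fl.
- by move=> i; rewrite fl.
Qed.

End Alg.



Theorem theorem1 (R : realType) (n d m : nat) (c : 'I_n -> int)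
  (A : 'I_m -> 'I_n -> R) (b : 'I_m -> R) :
  (0 < n)%N -> (0 < d)%N ->
  (forall i, 0 <= c i) ->
  (forall x, polyhedron A b x -> forall i, 0 <= x i <= d%:R) ->
  (exists x : 'I_n -> int, polyhedron A b (fun i => (x i)%:~R)) ->
  exists (T : nat) (L : nat -> ('I_n.+1 -> R) -> Prop) (z : nat -> 'I_n.+1 -> R),
    algorithm_run d (polyhedron A b) c T L z /\
    lex_max (Sset (polyhedron A b) c) (z T).
Proof.
move=> _ _ hc hb hne; exact: (@main_run R n d m c A b hc hb hne).
Qed.
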